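(* Define $a_0 = 0$ and $a_n = \sum_{k=0}^{n-1} k!\,(n-k-1)!$ for $n \geq 1$. Then for every natural number $n$, $$G_n = \sum_{k=0}^{n} (-1)^{k-1} a_k\, S(n,k).$$
   Context: The Genocchi numbers $G_n$ ($n \in \mathbb{N}$) are defined by the exponential generating function $\frac{2x}{e^x+1} = \sum_{n=0}^{\infty} G_n \frac{x^n}{n!}$. The Stirling numbers of the second kind $S(n,k)$ ($0 \le k \le n$) are the integers defined by the polynomial identity $X^n = \sum_{k=0}^{n} S(n,k)\, X(X-1)\cdots(X-k+1)$. *)

(* Defs.v *)
From HB Require Import structures.
From mathcomp Require Import all_boot all_order all_algebra.
Set Implicit Arguments. Unset Strict Implicit. Unset Printing Implicit Defensive.
Import Order.TTheory GRing.Theory Num.Theory.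
Local Open Scope ring_scope.

Definition fps := nat -> rat.

Definition fps_mul (f g : fps) : fps :=
  fun n => \sum_(i < n.+1) f i * g (n - i)%N.

Definition egf (u : nat -> rat) : fps := fun n => u n / (n`!)%:R.

Definition fps_exp_plus_1 : fps := fun n => 1 / (n`!)%:R + (n == 0%N)%:R.

Definition fps_2x : fps := fun n => (n == 1%N)%:R *+ 2.

(* G is the Genocchi sequence: 2x/(e^x+1) = sum G_n x^n/n!, i.e. (since
   e^x+1 is invertible as a formal power series) egf G * (e^x + 1) = 2x. *)
Definition is_genocchi (G : nat -> rat) : Prop :=
  forall n, fps_mul (egf G) fps_exp_plus_1 n = fps_2x n.

Definition is_stirling2 (S : nat -> nat -> int) : Prop :=
  forall n : nat,
    ('X^n : {poly int}) =
      \sum_(k < n.+1) S n k *: \prod_(i < k) ('X - (i%:R)%:P).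

Definition a_seq (n : nat) : nat :=
  if n is 0 then 0 else \sum_(k < n) (k`! * (n - k - 1)`!)%N.

(* Main.v *)
Require Import Defs.
From HB Require Import structures.
From mathcomp Require Import all_boot all_order all_algebra.
Import Order.TTheory GRing.Theory Num.Theory.
From mathcomp Require Import ring lra.
Local Open Scope ring_scope.

Definition ff (k : nat) : {poly rat} := \prod_(i < k) ('X - (i%:R)%:P).

Lemma hypR {S : nat -> nat -> int} : is_stirling2 S ->
  forall n, ('X^n : {poly rat}) = \sum_(k < n.+1) ((S n k)%:~R : rat) *: ff k.
Proof.
move=> hS n; have := congr1 (map_poly (intr : int -> rat)) (hS n).
rewrite map_polyXn => ->; rewrite rmorph_sum; apply: eq_bigr => k _.
rewrite -!mul_polyC rmorphM /= map_polyC /= rmorph_prod /ff; congr (_ * _); apply: eq_bigr => i _.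
by rewrite rmorphB /= map_polyX map_polyC /= rmorph_nat.
Qed.

Lemma ff_monic k : ff k \is monic.
Proof. exact: monic_prod_XsubC. Qed.

Lemma size_ff k : size (ff k) = k.+1.
Proof. by rewrite /ff size_prod_XsubC /index_enum -enumT size_enum_ord. Qed.

Lemma coef_ff_top k : (ff k)`_k = 1.
Proof.
have := ff_monic k; rewrite monicE /lead_coef size_ff /=. by move/eqP.
Qed.

Lemma coef_ff_big k j : (k < j)%N -> (ff k)`_j = 0.
Proof. by move=> h; apply: nth_default; rewrite size_ff. Qed.

Lemma ff_uniq M (b : nat -> rat) :
  \sum_(k < M) b k *: ff k = 0 -> forall k, (k < M)%N -> b k = 0.
Proof.
elim: M => [|M IH] //= h.
have hM : b M = 0.
  have := congr1 (fun p : {poly rat} => p`_M) h; rewrite /= big_ord_recr /= coefD coefZ.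
  rewrite coef_ff_top mulr1 coef_sum big1 ?add0r ?coef0 //.
  by move=> i _; rewrite coefZ coef_ff_big ?mulr0.
move: h; rewrite big_ord_recr /= hM scale0r addr0 => h k.
rewrite ltnS leq_eqVlt => /orP [/eqP -> //|]; exact: IH.
Qed.

Lemma ffS k : ff k.+1 = ff k * ('X - (k%:R)%:P).
Proof. by rewrite /ff big_ord_recr. Qed.

Lemma ff_shift k : ff k.+1 \Po ('X + 1) = ff k.+1 + (k.+1)%:R *: ff k.
Proof.
have h1 : ff k.+1 \Po ('X + 1) = ('X + 1) * ff k.
  rewrite /ff rmorph_prod big_ord_recl /=; congr (_ * _).
    by rewrite comp_polyB comp_polyX comp_polyC polyC0 subr0.
  apply: eq_bigr => i _; rewrite comp_polyB comp_polyX comp_polyC.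
  rewrite /bump /= add1n -addn1 natrD polyCD opprD polyC1; ring.
rewrite h1 ffS -mul_polyC !polyC_natr -addn1 natrD; ring.
Qed.

From mathcomp Require Import zify.

Lemma aS k : a_seq k.+1 = (\sum_(j < k.+1) j`! * (k - j)`!)%N.
Proof.
rewrite /=; apply: eq_bigr => j _.
by rewrite (_ : (k.+1 - j - 1 = k - j)%N) //; lia.
Qed.

Lemma a_rec k : (2 * a_seq k.+1 = k.+1 * a_seq k + 2 * k`!)%N.
Proof.
case: k => [|m]; first by rewrite /a_seq big_ord1.
rewrite aS aS.
have e1 : (\sum_(j < m.+2) j`! * (m.+1 - j)`! =
   m.+1`! + \sum_(j < m.+1) j.+1`! * (m - j)`!)%N.
  by rewrite big_ord_recl /= fact0 subn0 mul1n.
have e2 : (\sum_(j < m.+2) j`! * (m.+1 - j)`! =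
   \sum_(j < m.+1) j`! * (m.+1 - j)`! + m.+1`!)%N.
  by rewrite big_ord_recr /= subnn fact0 muln1.
have e3 : (m.+2 * \sum_(j < m.+1) j`! * (m - j)`! =
  \sum_(j < m.+1) j.+1`! * (m - j)`! + \sum_(j < m.+1) j`! * (m.+1 - j)`!)%N.
  rewrite big_distrr -big_split /=; apply: eq_bigr => j _.
  have hj : (j <= m)%N by rewrite -ltnS.
  rewrite factS (_ : (m.+1 - j = (m - j).+1)%N); last by lia.
  rewrite factS.
  have : ((m - j).+1 + j.+1 = m.+2)%N by lia.
  move=> <-. lia.
lia.
Qed.

Lemma coefMXsubC' (p : {poly rat}) (c : rat) i :
  (p * ('X - c%:P))`_i.+1 = p`_i - c * p`_i.+1.
Proof. by rewrite mulrBr coefB coefMX coefMC mulrC. Qed.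

Lemma coefMXsubC0 (p : {poly rat}) (c : rat) :
  (p * ('X - c%:P))`_0 = - c * p`_0.
Proof. by rewrite mulrBr coefB coefMX coefMC /= sub0r mulrC mulNr. Qed.

Lemma ff0 k : (ff k.+1)`_0 = 0.
Proof.
elim: k => [|k IH]; first by rewrite ffS /ff big_ord0 mul1r coefB coefX coefC subr0.
by rewrite ffS coefMXsubC0 IH mulr0.
Qed.

Lemma ff1 k : (ff k.+1)`_1 = (-1) ^+ k * (k`!)%:R.
Proof.
elim: k => [|k IH].
  by rewrite ffS /ff big_ord0 mul1r coefB coefX coefC subr0 expr0 mul1r.
rewrite ffS coefMXsubC' ff0 IH factS natrM exprS; ring.
Qed.

Lemma sgnz k : (-1 : rat) ^ (k%:Z - 1) = - (-1) ^+ k.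
Proof.
case: k => [|k]; first by rewrite sub0r exprN1 invrN1 expr0.
rewrite (_ : (k.+1)%:Z - 1 = k%:Z); last by rewrite -addn1 PoszD addrK.
by rewrite exprS mulN1r opprK.
Qed.

Definition cc (k : nat) : rat := (-1 : rat) ^ (k%:Z - 1) * (a_seq k)%:R.

Lemma cc_rec k : 2 * cc k + k%:R * cc k.-1 = 2 * (ff k)`_1.
Proof.
case: k => [|k]; first by rewrite /cc /ff big_ord0 coefC /= mulr0 mul0r addr0.
rewrite /= ff1 /cc !sgnz.
have := a_rec k; move/(congr1 (fun x : nat => x%:R : rat)).
rewrite !natrD !natrM => h.
rewrite exprS.
set A := (a_seq k.+1)%:R in h *; set B := (a_seq k)%:R in h *.
have -> : 2 * (- (-1 * (-1) ^+ k) * A) + k.+1%:R * (- (-1) ^+ k * B) =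
  (-1) ^+ k * ((A + (A + 0)) - (k.+1)%:R * B) by ring.
rewrite h -addn1 natrD; ring.
Qed.

Definition st (S : nat -> nat -> int) i k : rat :=
  if (k <= i)%N then (S i k)%:~R else 0.

Lemma hypM {S} : is_stirling2 S -> forall i M, (i < M)%N ->
  ('X^i : {poly rat}) = \sum_(k < M) st S i k *: ff k.
Proof.
move=> hS i M hM; rewrite (hypR hS) (big_ord_widen M (fun k => ((S i k)%:~R : rat) *: ff k)) //.
rewrite big_mkcond; apply: eq_bigr => k _; rewrite /st ltnS.
by case: ifP => _; rewrite ?scale0r.
Qed.

Lemma ff_shift' k : ff k \Po ('X + 1) = ff k + k%:R *: ff k.-1.
Proof.
case: k => [|k]; last exact: ff_shift.
by rewrite /ff big_ord0 comp_polyC scale0r addr0.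
Qed.

Lemma ID1 {S} : is_stirling2 S -> forall n k, (k < n.+2)%N ->
  \sum_(i < n.+1) 'C(n, i)%:R * st S i k = st S n k + k.+1%:R * st S n k.+1.
Proof.
move=> hS n.
pose b k := \sum_(i < n.+1) 'C(n, i)%:R * st S i k - (st S n k + k.+1%:R * st S n k.+1).
suff: \sum_(k < n.+2) b k *: ff k = 0.
  by move=> /ff_uniq h k /h /eqP; rewrite subr_eq0 => /eqP.
have eA : ('X + 1) ^+ n = \sum_(k < n.+2) (\sum_(i < n.+1) 'C(n, i)%:R * st S i k) *: ff k.
  rewrite exprD1n.
  under eq_bigr => i _ do rewrite (hypM hS i n.+2 (leqW (ltn_ord i))) -scaler_nat scaler_sumr.
  rewrite exchange_big /=; apply: eq_bigr => k _; rewrite scaler_suml.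
  by apply: eq_bigr => i _; rewrite scalerA.
have eB : ('X + 1) ^+ n = \sum_(k < n.+2) (st S n k + k.+1%:R * st S n k.+1) *: ff k.
  rewrite -comp_Xn_poly (hypM hS n n.+2) // linear_sum /=.
  under eq_bigr => k _ do rewrite linearZ /= ff_shift' scalerDr scalerA.
  rewrite big_split /=.
  under [X in _ = X]eq_bigr => k _ do rewrite scalerDl -scalerA.
  rewrite big_split /=; congr (_ + _).
  rewrite big_ord_recl /= mulr0 scale0r add0r [RHS]big_ord_recr /=.
  have hz : st S n n.+2 = 0 by rewrite /st; case: leqP => //; lia.
  rewrite hz scale0r scaler0 addr0.
  apply: eq_bigr => k _; rewrite /bump /= add1n add0n scalerA mulrC //.
under eq_bigr => k _ do rewrite scalerBl.
by rewrite sumrB -eA -eB subrr.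
Qed.

Definition TT (S : nat -> nat -> int) i : rat := \sum_(k < i.+1) cc k * (S i k)%:~R.

Lemma Text S i M : (i < M)%N -> TT S i = \sum_(k < M) cc k * st S i k.
Proof.
move=> hM; rewrite /TT (big_ord_widen M (fun k => cc k * (S i k)%:~R)) //.
rewrite big_mkcond; apply: eq_bigr => k _; rewrite /st ltnS.
by case: ifP => _; rewrite ?mulr0.
Qed.

Lemma Trec S : is_stirling2 S -> forall n,
  \sum_(i < n.+1) 'C(n, i)%:R * TT S i + TT S n = 2 * (n == 1)%:R.
Proof.
move=> hS n.
under eq_bigr => i _ do rewrite (@Text S i n.+2 (leqW (ltn_ord i))) big_distrr.
rewrite exchange_big /=.
have e1 : forall k : 'I_n.+2, \sum_(i < n.+1) 'C(n, i)%:R * (cc k * st S i k) =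
    cc k * (st S n k + k.+1%:R * st S n k.+1).
  move=> k; rewrite -(ID1 hS n k (ltn_ord k)) big_distrr; apply: eq_bigr => i _ /=; ring.
under eq_bigr => k _ do rewrite e1.
rewrite (@Text S n n.+2 (ltnW (ltnSn n.+1))).
rewrite -big_split /=.
under eq_bigr => k _ do rewrite mulrDr addrAC.
rewrite big_split /=.
have e2 : \sum_(k < n.+2) cc k * (k.+1%:R * st S n k.+1) =
          \sum_(k < n.+2) k%:R * cc k.-1 * st S n k.
  rewrite big_ord_recr /= [RHS]big_ord_recl /= !mul0r add0r.
  have hz : st S n n.+2 = 0 by rewrite /st; case: leqP => //; lia.
  rewrite hz !mulr0 addr0; apply: eq_bigr => k _.
  by rewrite /bump /= add1n; ring.
rewrite e2 -big_split /=.
rewrite (eq_bigr (fun k : 'I_n.+2 => 2 * (ff k)`_1 * st S n k)); last first.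
  by move=> k _; rewrite -cc_rec /=; ring.
have := congr1 (fun p : {poly rat} => p`_1) (hypM hS n n.+2 (ltnW (ltnSn n.+1))).
rewrite /= coefXn coef_sum => h.
rewrite [n == 1]eq_sym h mulr_sumr; apply: eq_bigr => k _; rewrite coefZ /=; ring.
Qed.

Lemma fact_neq0 k : (k`!%:R : rat) != 0.
Proof. by rewrite pnatr_eq0 -lt0n fact_gt0. Qed.

Lemma Grec G : is_genocchi G -> forall n,
  \sum_(i < n.+1) 'C(n, i)%:R * G i + G n = 2 * (n == 1)%:R.
Proof.
move=> hG n; have h := hG n; move: h.
rewrite /fps_mul /egf /fps_exp_plus_1 /fps_2x => h.
have eR : (n`!%:R : rat) * ((n == 1)%:R *+ 2) = 2 * (n == 1)%:R.
  by case: (n =P 1) => [->|_] /=; rewrite ?mulr0n ?mulr0 // mulr1n mul1r mulr1.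
rewrite -eR -h mulr_sumr.
have et : forall i : 'I_n.+1, n`!%:R * (G i / i`!%:R * (1 / (n - i)`!%:R + ((n - i)%N == 0%N)%:R))
   = 'C(n, i)%:R * G i + (i == n :> nat)%:R * G i.
  move=> i; have hi : (i <= n)%N by rewrite -ltnS.
  have hf1 := fact_neq0 i; have hf2 := fact_neq0 (n - i).
  have e : ((n`!)%:R : rat) = 'C(n, i)%:R * (i`!%:R * (n - i)`!%:R).
    by rewrite -natrM -natrM bin_fact.
  case: (eqVneq (i : nat) n) => [ei|ne].
    rewrite ei subnn eqxx /= binn fact0 mul1r; field.
    by rewrite ei in hf1.
  have -> : (n - i == 0)%N = false by apply/negbTE; rewrite subn_eq0 -ltnNge ltn_neqAle ne.
  rewrite e /=; field; by apply/andP.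
rewrite (eq_bigr _ (fun i _ => et i)) big_split /=; congr (_ + _).
rewrite big_ord_recr /= eqxx mul1r big1 ?add0r // => i _.
by rewrite (ltn_eqF (ltn_ord i)) mul0r.
Qed.

Theorem mainTheorem6 (G : nat -> rat) (S : nat -> nat -> int) :
  is_genocchi G -> is_stirling2 S ->
  forall n : nat,
    G n = \sum_(k < n.+1)
            ((-1 : rat) ^ (k%:Z - 1) * (a_seq k)%:R * (S n k)%:~R).
Proof.
move=> hG hS n; rewrite -/(TT S n); elim/ltn_ind: n => m IH.
have := Grec G hG m; rewrite -(Trec S hS m) !big_ord_recr /= binn mul1r.
rewrite (eq_bigr (fun i : 'I_m => 'C(m, i)%:R * TT S i)); last first.
  by move=> i _; rewrite IH.
rewrite -!addrA => /addrI h; lra.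
Qed.
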